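(* Let $\kappa>0$, $D_\kappa=\pi/\sqrt\kappa$, let $X$ be a complete CAT($\kappa$) space such that $d(v,v')<D_\kappa/2$ for all $v,v'\in X$, and let $T\colon X\to X$ be firmly $\kappa$-vicinal. If $\mathrm{Fix}(T)$ is nonempty, then for each $x\in X$, $\{T^nx\}$ is $\Delta$-convergent to an element of $\mathrm{Fix}(T)$.
   Context: A CAT($\kappa$) space ($\kappa>0$) is a $D_\kappa$-geodesic metric space in which every geodesic triangle of perimeter $<2D_\kappa$ satisfies the comparison inequality $d(p,q)\le\rho_\kappa(\bar p,\bar q)$ relative to comparison triangles in $M_\kappa=(\mathbb S^2,\rho_{\mathbb S^2}/\sqrt\kappa)$. $\{x_n\}$ is $\Delta$-convergent to $p$ if for every subsequence $\{x_{n_i}\}$, $p$ is the unique minimizer of $z\mapsto\limsup_i d(x_{n_i},z)$. With $\tilde C_z=\cos\sqrt\kappa\, d(Tz,z)$, $T$ is firmly $\kappa$-vicinal if for all $x,y\in X$: $\bigl(\tilde C_x^2(1+\tilde C_y^2)\tilde C_y+\tilde C_y^2(1+\tilde C_x^2)\tilde C_x\bigr)\cos\sqrt\kappa d(Tx,Ty)\ge\tilde C_x^2(1+\tilde C_y^2)\cos\sqrt\kappa d(Tx,y)+\tilde C_y^2(1+\tilde C_x^2)\cos\sqrt\kappa d(Ty,x)$. *)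

(* Defs.v *)
From Stdlib Require Import Reals Lra.
Open Scope R_scope.

Record is_metric {X : Type} (d : X -> X -> R) : Prop := {
  dist_nonneg : forall x y, 0 <= d x y;
  dist_eq0 : forall x y, d x y = 0 <-> x = y;
  dist_sym : forall x y, d x y = d y x;
  dist_tri : forall x y z, d x z <= d x y + d y z }.

Definition Dk (kappa : R) : R := PI / sqrt kappa.

Definition geodesic {X : Type} (d : X -> X -> R) (x y : X) (c : R -> X) : Prop :=
  c 0 = x /\ c (d x y) = y /\
  forall s t, 0 <= s <= d x y -> 0 <= t <= d x y -> d (c s) (c t) = Rabs (s - t).

Definition D_geodesic {X : Type} (d : X -> X -> R) (D : R) : Prop :=
  forall x y, d x y < D -> exists c, geodesic d x y c.

(** Model space M_kappa = (S^2, rho_{S^2} / sqrt kappa), S^2 the unit sphere of R^3. *)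
Definition pt3 := (R * R * R)%type.
Definition dot3 (u v : pt3) : R :=
  let '(a1, b1, c1) := u in let '(a2, b2, c2) := v in a1 * a2 + b1 * b2 + c1 * c2.
Definition on_S2 (u : pt3) : Prop := dot3 u u = 1.
Definition rho_S2 (u v : pt3) : R := acos (dot3 u v).
Definition rho_k (kappa : R) (u v : pt3) : R := rho_S2 u v / sqrt kappa.

(** x = c s is the point of the side [a,b] (geodesic c) at distance s from a,
    and xb is its comparison point on the side [ab,bb] of the comparison
    triangle in M_kappa (the point of the model segment at distance s from ab). *)
Definition side_pair {X : Type} (d : X -> X -> R) (kappa : R)
    (a b : X) (c : R -> X) (ab bb : pt3) (x : X) (xb : pt3) : Prop :=
  exists s, 0 <= s <= d a b /\ x = c s /\ on_S2 xb /\
    rho_k kappa ab xb = s /\ rho_k kappa ab xb + rho_k kappa xb bb = rho_k kappa ab bb.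

Definition CAT {X : Type} (kappa : R) (d : X -> X -> R) : Prop :=
  D_geodesic d (Dk kappa) /\
  forall (p q r : X) (cpq cqr crp : R -> X),
    geodesic d p q cpq -> geodesic d q r cqr -> geodesic d r p crp ->
    d p q + d q r + d r p < 2 * Dk kappa ->
    forall pb qb rb : pt3, on_S2 pb -> on_S2 qb -> on_S2 rb ->
      rho_k kappa pb qb = d p q -> rho_k kappa qb rb = d q r -> rho_k kappa rb pb = d r p ->
      let in_tri x xb :=
        side_pair d kappa p q cpq pb qb x xb \/
        side_pair d kappa q r cqr qb rb x xb \/
        side_pair d kappa r p crp rb pb x xb in
      forall x xb y yb, in_tri x xb -> in_tri y yb -> d x y <= rho_k kappa xb yb.

Definition complete {X : Type} (d : X -> X -> R) : Prop :=
  forall u : nat -> X,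
    (forall eps, 0 < eps -> exists N, forall m n, (N <= m)%nat -> (N <= n)%nat ->
        d (u m) (u n) < eps) ->
    exists l, forall eps, 0 < eps -> exists N, forall n, (N <= n)%nat -> d (u n) l < eps.

Definition is_limsup (u : nat -> R) (l : R) : Prop :=
  forall eps, 0 < eps ->
    (exists N, forall n, (N <= n)%nat -> u n < l + eps) /\
    (forall N, exists n, (N <= n)%nat /\ l - eps < u n).

Definition Delta_conv {X : Type} (d : X -> X -> R) (x : nat -> X) (p : X) : Prop :=
  forall phi : nat -> nat, (forall i, (phi i < phi (S i))%nat) ->
    forall lp, is_limsup (fun i => d (x (phi i)) p) lp ->
    forall z lz, is_limsup (fun i => d (x (phi i)) z) lz ->
      z <> p -> lp < lz.

Definition firmly_vicinal {X : Type} (kappa : R) (d : X -> X -> R) (T : X -> X) : Prop :=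
  let C z := cos (sqrt kappa * d (T z) z) in
  forall x y,
    (C x ^ 2 * (1 + C y ^ 2) * C y + C y ^ 2 * (1 + C x ^ 2) * C x)
       * cos (sqrt kappa * d (T x) (T y))
    >= C x ^ 2 * (1 + C y ^ 2) * cos (sqrt kappa * d (T x) y)
       + C y ^ 2 * (1 + C x ^ 2) * cos (sqrt kappa * d (T y) x).

(* Main.v *)
Require Import Defs.
From Stdlib Require Import Reals.
From Stdlib Require Import Lra Psatz IndefiniteDescription Classical.
From Coquelicot Require Lim_seq Rbar.
Open Scope R_scope.

Lemma cos_lip u v : Rabs (cos u - cos v) <= Rabs (u - v).
Proof.
  destruct (MVT_abs cos (fun c => - sin c) v u) as [c [Hc _]].
  { intros c _. apply derivable_pt_lim_cos. }
  rewrite Hc. rewrite <- (Rmult_1_l (Rabs (u - v))) at 2.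
  apply Rmult_le_compat_r; [apply Rabs_pos|].
  rewrite Rabs_Ropp. apply Rabs_le. apply SIN_bound.
Qed.

Lemma cos_upper a : 0 <= a <= PI/2 -> cos a <= 1 - a^2/3.
Proof.
  intros Ha. destruct (cos_bound a 0) as [_ H]; try lra.
  assert (HP := PI_4).
  unfold cos_approx, cos_term in H. simpl in H.
  assert (a^2 <= 4) by nra.
  unfold INR in H. simpl in H. nra.
Qed.


Lemma tri_ineq_cos A B C : 0 <= A -> 0 <= B -> 0 <= C -> Rabs (A - B) <= C -> C <= A + B -> A + B <= PI ->
  0 <= 1 - cos A ^ 2 - cos B ^ 2 - cos C ^ 2 + 2 * cos A * cos B * cos C.
Proof.
  intros HA HB HC H1 H2 H3.
  assert (E1 : cos C <= cos (A - B)).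
  { destruct (Rle_dec B A).
    - rewrite Rabs_right in H1 by lra. apply cos_decr_1; lra.
    - rewrite Rabs_left in H1 by lra. replace (A - B) with (- (B - A)) by ring.
      rewrite cos_neg. apply cos_decr_1; lra. }
  assert (E2 : cos (A + B) <= cos C) by (apply cos_decr_1; lra).
  rewrite cos_minus in E1. rewrite cos_plus in E2.
  assert (P : 0 <= (cos A * cos B + sin A * sin B - cos C) * (cos C - (cos A * cos B - sin A * sin B))) by nra.
  assert (SA := sin2_cos2 A). assert (SB := sin2_cos2 B). unfold Rsqr in *.
  replace (1 - cos A ^ 2 - cos B ^ 2 - cos C ^ 2 + 2 * cos A * cos B * cos C)
    with ((cos A * cos B + sin A * sin B - cos C) * (cos C - (cos A * cos B - sin A * sin B))); [exact P|].
  replace (cos A ^ 2) with (1 - sin A * sin A) by nra.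
  replace (cos B ^ 2) with (1 - sin B * sin B) by nra.
  nra.
Qed.


Record setting {X : Type} (d : X -> X -> R) (kappa : R) : Prop := {
  st_k : 0 < kappa; st_m : is_metric d; st_cat : CAT kappa d;
  st_diam : forall v v', d v v' < Dk kappa / 2 }.

Definition ee {X : Type} (d : X -> X -> R) kappa (a b : X) := cos (sqrt kappa * d a b).

Lemma sk_pos kappa : 0 < kappa -> 0 < sqrt kappa.
Proof. intros; apply sqrt_lt_R0; auto. Qed.

Lemma sd_bound {X} (d : X -> X -> R) kappa (H : setting d kappa) a b :
  0 <= sqrt kappa * d a b < PI / 2.
Proof.
  destruct H as [Hk Hm _ Hd]. assert (Hs := sk_pos kappa Hk).
  assert (H0 := dist_nonneg d Hm a b). specialize (Hd a b). unfold Dk in Hd.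
  split. nra.
  apply (Rmult_lt_compat_l (sqrt kappa)) in Hd; auto.
  replace (sqrt kappa * (PI / sqrt kappa / 2)) with (PI/2) in Hd by (field; lra). lra.
Qed.

Lemma acos_cos_k kappa t : 0 < kappa -> 0 <= t <= PI -> acos (cos t) / sqrt kappa = t / sqrt kappa.
Proof. intros; rewrite acos_cos; auto. Qed.

Lemma lemmaS {X} (d : X -> X -> R) kappa (H : setting d kappa) z w :
  exists m, forall x, ee d kappa x z + ee d kappa x w <= 2 * cos (sqrt kappa * d z w / 2) * ee d kappa x m.
Proof.
  assert (Hk := st_k _ _ H). assert (Hm := st_m _ _ H). assert (Hs := sk_pos kappa Hk).
  destruct (st_cat _ _ H) as [Hgeo Hcat].
  assert (HPI := PI_RGT_0).
  set (s := sqrt kappa) in *.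
  destruct (Req_dec (d z w) 0) as [Hz|Hz].
  { apply (dist_eq0 d Hm) in Hz. subst w. exists z. intros x.
    rewrite (proj2 (dist_eq0 d Hm z z) eq_refl). replace (s * 0 / 2) with 0 by field.
    rewrite cos_0. lra. }
  assert (Hc0 : 0 < d z w) by (assert (H0 := dist_nonneg d Hm z w); lra).
  assert (HDk : Dk kappa = PI / s) by reflexivity.
  assert (Hdz := st_diam _ _ H z w).
  assert (Hpos : 0 < Dk kappa) by (rewrite HDk; apply Rdiv_lt_0_compat; lra).
  destruct (Hgeo z w) as [g Hg]; [lra|].
  exists (g (d z w / 2)). intros x.
  destruct (Hgeo w x) as [cr Hcr]; [assert (Hh := st_diam _ _ H w x); lra|].
  destruct (Hgeo x z) as [crp Hcrp]; [assert (Hh := st_diam _ _ H x z); lra|].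
  set (hh := s * d z w / 2).
  assert (Hb1 := sd_bound d kappa H z w). fold s in Hb1.
  assert (Hhh : 0 < hh < PI / 4) by (unfold hh; split; nra).
  set (k := cos hh). set (sg := sin hh).
  assert (Hk0 : 0 < k) by (unfold k; apply cos_gt_0; lra).
  assert (Hsg : 0 < sg) by (unfold sg; apply sin_gt_0; lra).
  assert (Hks : sg * sg + k * k = 1) by (assert (T := sin2_cos2 hh); unfold Rsqr in T; unfold k, sg; lra).
  set (A := s * d x z). set (B := s * d x w). set (C := s * d z w).
  set (al := cos A). set (be := cos B).
  set (u := (al + be) / (2 * k)). set (v := (al - be) / (2 * sg)).
  assert (HC : cos C = k * k - sg * sg).
  { unfold C, k, sg. replace (s * d z w) with (2 * hh) by (unfold hh; field). apply cos_2a. }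
  assert (Hbnd : 0 <= 1 - u ^ 2 - v ^ 2).
  { assert (T := tri_ineq_cos A B C).
    assert (HA := sd_bound d kappa H x z). assert (HB := sd_bound d kappa H x w).
    fold s A in HA. fold s B in HB.
    assert (Ht1 : Rabs (A - B) <= C).
    { unfold A, B, C. rewrite <- Rmult_minus_distr_l, Rabs_mult, (Rabs_right s) by lra.
      apply Rmult_le_compat_l; [lra|]. apply Rabs_le.
      assert (T1 := Defs.dist_tri d Hm x w z). assert (T2 := Defs.dist_tri d Hm x z w).
      rewrite (Defs.dist_sym d Hm w z) in T1. lra. }
    assert (Ht2 : C <= A + B).
    { unfold A, B, C. rewrite <- Rmult_plus_distr_l. apply Rmult_le_compat_l; [lra|].
      assert (T1 := Defs.dist_tri d Hm z x w). rewrite (Defs.dist_sym d Hm z x) in T1. lra. }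
    assert (HC0 : 0 <= C < PI/2) by (unfold C; lra).
    specialize (T ltac:(lra) ltac:(lra) ltac:(lra) Ht1 Ht2 ltac:(lra)).
    fold al be in T. rewrite HC in T.
    replace (1 - u ^ 2 - v ^ 2) with ((4*k*k*sg*sg - (al+be)^2*(sg*sg) - (al-be)^2*(k*k)) / (4*k*k*sg*sg))
      by (unfold u, v; field; lra).
    apply Rle_mult_inv_pos; [|assert (0 < k*k) by nra; assert (0 < sg*sg) by nra; nra].
    replace (4*k*k*sg*sg) with (1 - (k*k - sg*sg)^2) by nra.
    replace (al^2 + be^2) with (al^2+be^2) by ring.
    nra. }
  set (t := sqrt (1 - u ^ 2 - v ^ 2)).
  assert (Ht : t * t = 1 - u ^ 2 - v ^ 2) by (apply sqrt_sqrt; auto).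

  assert (Hu1 : -1 <= u <= 1) by (split; nra).
  set (pb := (k, sg, 0) : pt3). set (qb := (k, - sg, 0) : pt3). set (rb := (u, v, t) : pt3).
  set (mb := (1, 0, 0) : pt3).
  assert (Hdot_pq : dot3 pb qb = cos C) by (unfold dot3, pb, qb; simpl; rewrite HC; ring).
  assert (Hdot_qr : dot3 qb rb = be) by (unfold dot3, qb, rb, u, v; simpl; field; lra).
  assert (Hdot_rp : dot3 rb pb = al) by (unfold dot3, pb, rb, u, v; simpl; field; lra).
  assert (Hdot_rr : dot3 rb rb = 1) by (unfold dot3, rb; simpl; nra).
  assert (Hdot_pm : dot3 pb mb = k) by (unfold dot3, pb, mb; simpl; ring).
  assert (Hdot_mq : dot3 mb qb = k) by (unfold dot3, qb, mb; simpl; ring).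
  assert (Hdot_rm : dot3 rb mb = u) by (unfold dot3, rb, mb; simpl; ring).
  assert (HA := sd_bound d kappa H x z). assert (HB := sd_bound d kappa H x w).
  fold s A in HA. fold s B in HB.
  assert (HC0 : 0 <= C < PI/2) by (unfold C; lra).
  assert (HA' : 0 <= s * d x z < PI/2) by exact HA.
  assert (HB' : 0 <= s * d x w < PI/2) by exact HB.
  assert (Ehh : acos k = hh) by (unfold k; apply acos_cos; lra).
  assert (E1 : rho_k kappa pb qb = d z w).
  { unfold rho_k, rho_S2. rewrite Hdot_pq. unfold C. rewrite acos_cos by lra. fold s. field; lra. }
  assert (E2 : rho_k kappa qb rb = d w x).
  { unfold rho_k, rho_S2. rewrite Hdot_qr. unfold be, B. rewrite acos_cos by lra. fold s.
    rewrite (Defs.dist_sym d Hm w x). field; lra. }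
  assert (E3 : rho_k kappa rb pb = d x z).
  { unfold rho_k, rho_S2. rewrite Hdot_rp. unfold al, A. rewrite acos_cos by lra. fold s. field; lra. }
  assert (Hper : d z w + d w x + d x z < 2 * Dk kappa).
  { assert (H1 := st_diam _ _ H w x). assert (H2 := st_diam _ _ H x z). lra. }
  assert (OS_p : on_S2 pb) by (unfold on_S2, dot3, pb; simpl; lra).
  assert (OS_q : on_S2 qb) by (unfold on_S2, dot3, qb; simpl; lra).
  assert (OS_r : on_S2 rb) by exact Hdot_rr.
  assert (OS_m : on_S2 mb) by (unfold on_S2, dot3, mb; simpl; lra).
  assert (Hcmp := Hcat z w x g cr crp Hg Hcr Hcrp Hper pb qb rb OS_p OS_q OS_r E1 E2 E3).
  simpl in Hcmp.
  assert (Hle : d x (g (d z w / 2)) <= rho_k kappa rb mb).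
  { apply Hcmp.
    - right; right. exists 0. split; [split; [lra| apply Defs.dist_nonneg; auto]|].
      split; [destruct Hcrp as [Hc0' _]; auto|]. split; [auto|].
      unfold rho_k, rho_S2. rewrite Hdot_rr, acos_1. unfold Rdiv. rewrite Rmult_0_l. split; ring.
    - left. exists (d z w / 2). split; [lra|]. split; [reflexivity|]. split; [auto|].
      assert (Hpm : rho_k kappa pb mb = d z w / 2).
      { unfold rho_k, rho_S2. rewrite Hdot_pm, Ehh. unfold hh. fold s. field; lra. }
      assert (Hmq : rho_k kappa mb qb = d z w / 2).
      { unfold rho_k, rho_S2. rewrite Hdot_mq, Ehh. unfold hh. fold s. field; lra. }
      rewrite Hpm, Hmq, E1. split; lra. }
  unfold rho_k, rho_S2 in Hle. rewrite Hdot_rm in Hle. fold s in Hle.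
  assert (Hle2 : s * d x (g (d z w / 2)) <= acos u).
  { apply (Rmult_le_compat_l s) in Hle; [|lra].
    replace (s * (acos u / s)) with (acos u) in Hle by (field; lra). exact Hle. }
  assert (Hb3 := sd_bound d kappa H x (g (d z w / 2))). fold s in Hb3.
  assert (Hac := acos_bound u).
  assert (Hcc : u <= cos (s * d x (g (d z w / 2)))).
  { rewrite <- (cos_acos u) at 1 by lra. apply cos_decr_1; lra. }
  unfold ee. fold s. fold A B al be. fold hh k.
  replace (s * d z w / 2) with hh by reflexivity. fold k.
  replace (al + be) with (2 * k * u) by (unfold u; field; lra).
  apply Rmult_le_compat_l; [lra| exact Hcc].
Qed.


Definition LI (u : nat -> R) (l : R) : Prop :=
  (forall eps, 0 < eps -> exists N, forall n, (N <= n)%nat -> l - eps < u n) /\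
  (forall eps, 0 < eps -> forall N, exists n, (N <= n)%nat /\ u n < l + eps).

Lemma LI_ex u lo hi : (forall n, lo <= u n <= hi) -> exists l, LI u l.
Proof.
  intros Hb. destruct (Lim_seq.ex_LimInf_seq u) as [l Hl].
  destruct l as [l| |]; simpl in Hl.
  - exists l. split.
    + intros eps He. destruct (Hl (mkposreal eps He)) as [_ H2]. exact H2.
    + intros eps He N. destruct (Hl (mkposreal eps He)) as [H1 _]. apply H1.
  - destruct (Hl hi) as [N HN]. specialize (HN N (le_n N)). specialize (Hb N). lra.
  - destruct (Hl lo 0%nat) as [n [_ Hn]]. specialize (Hb n). lra.
Qed.

Lemma small_le a b K : 0 <= K -> (forall eps, 0 < eps -> a < b + K * eps) -> a <= b.
Proof.
  intros HK H. destruct (Rle_dec a b) as [|Hn]; auto.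
  exfalso. assert (0 < a - b) by lra.
  specialize (H ((a - b) / (K + 1))). assert (0 < (a - b) / (K + 1)) by (apply Rdiv_lt_0_compat; lra).
  specialize (H H1). assert (K * ((a - b) / (K + 1)) < a - b).
  { apply (Rmult_lt_reg_r (K + 1)); [lra|]. field_simplify; [|lra]. nra. }
  lra.
Qed.

Lemma LI_bounds u l lo hi : (forall n, lo <= u n <= hi) -> LI u l -> lo <= l <= hi.
Proof.
  intros Hb [H1 H2]. split.
  - apply (small_le lo l 1); [lra|]. intros eps He. destruct (H2 eps He 0%nat) as [n [_ Hn]].
    specialize (Hb n). lra.
  - apply (small_le l hi 1); [lra|]. intros eps He. destruct (H1 eps He) as [N HN].
    specialize (HN N (le_n N)). specialize (Hb N). lra.
Qed.

Lemma LI_unique u l1 l2 : LI u l1 -> LI u l2 -> l1 = l2.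
Proof.
  intros [A1 B1] [A2 B2].
  assert (forall a b, (forall eps, 0 < eps -> exists N, forall n, (N <= n)%nat -> a - eps < u n) ->
            (forall eps, 0 < eps -> forall N, exists n, (N <= n)%nat /\ u n < b + eps) -> a <= b).
  { intros a b Ha Hb. apply (small_le a b 2); [lra|]. intros eps He.
    destruct (Ha eps He) as [N HN]. destruct (Hb eps He N) as [n [Hn1 Hn2]].
    specialize (HN n Hn1). lra. }
  apply Rle_antisym; auto.
Qed.

Definition cvto (u : nat -> R) (l : R) := forall eps, 0 < eps -> exists N, forall n, (N <= n)%nat -> Rabs (u n - l) < eps.

Lemma sub_ge (phi : nat -> nat) : (forall i, (phi i < phi (S i))%nat) -> forall i, (i <= phi i)%nat.
Proof. intros H i. induction i; [lia|]. specialize (H i). lia. Qed.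

Lemma LI_cv_sub u l (phi : nat -> nat) : (forall i, (phi i < phi (S i))%nat) -> cvto u l -> LI (fun i => u (phi i)) l.
Proof.
  intros Hp Hc. assert (Hge := sub_ge phi Hp). split.
  - intros eps He. destruct (Hc eps He) as [N HN]. exists N. intros n Hn.
    assert (T := HN (phi n) ltac:(specialize (Hge n); lia)). apply Rabs_def2 in T. lra.
  - intros eps He N. destruct (Hc eps He) as [M HM]. exists (max N M). split; [lia|].
    assert (T := HM (phi (max N M)) ltac:(specialize (Hge (max N M)); lia)). apply Rabs_def2 in T. lra.
Qed.


Lemma abs_le x a : Rabs x <= a -> - a <= x <= a.
Proof. intros H. unfold Rabs in H. destruct (Rcase_abs x); lra. Qed.

Lemma ee_bnd {X} (d : X -> X -> R) kappa (H : setting d kappa) a b : 0 < ee d kappa a b <= 1.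
Proof.
  unfold ee. assert (T := sd_bound d kappa H a b). split.
  - apply cos_gt_0; lra.
  - apply COS_bound.
Qed.

Lemma ee_lip {X} (d : X -> X -> R) kappa (H : setting d kappa) a b z :
  Rabs (ee d kappa a z - ee d kappa b z) <= sqrt kappa * d a b.
Proof.
  unfold ee. eapply Rle_trans; [apply cos_lip|].
  assert (Hs := sk_pos kappa (st_k _ _ H)). assert (Hm := st_m _ _ H).
  rewrite <- Rmult_minus_distr_l, Rabs_mult, (Rabs_right (sqrt kappa)) by lra.
  apply Rmult_le_compat_l; [lra|]. apply Rabs_le.
  assert (T1 := Defs.dist_tri d Hm a b z). assert (T2 := Defs.dist_tri d Hm b a z).
  rewrite (Defs.dist_sym d Hm b a) in T2. lra.
Qed.

Lemma ee_lip2 {X} (d : X -> X -> R) kappa (H : setting d kappa) z a b :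
  Rabs (ee d kappa z a - ee d kappa z b) <= sqrt kappa * d a b.
Proof.
  unfold ee. eapply Rle_trans; [apply cos_lip|].
  assert (Hs := sk_pos kappa (st_k _ _ H)). assert (Hm := st_m _ _ H).
  rewrite <- Rmult_minus_distr_l, Rabs_mult, (Rabs_right (sqrt kappa)) by lra.
  apply Rmult_le_compat_l; [lra|]. apply Rabs_le.
  assert (T1 := Defs.dist_tri d Hm z a b). assert (T2 := Defs.dist_tri d Hm z b a).
  rewrite (Defs.dist_sym d Hm b a) in T2. lra.
Qed.

Lemma LI_mid {X} (d : X -> X -> R) kappa (H : setting d kappa) (y : nat -> X) z w m lz lw lm :
  (forall x, ee d kappa x z + ee d kappa x w <= 2 * cos (sqrt kappa * d z w / 2) * ee d kappa x m) ->
  LI (fun n => ee d kappa (y n) z) lz -> LI (fun n => ee d kappa (y n) w) lw ->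
  LI (fun n => ee d kappa (y n) m) lm ->
  lz + lw <= 2 * cos (sqrt kappa * d z w / 2) * lm.
Proof.
  intros Hm [Az _] [Aw _] [_ Bm].
  set (k := cos (sqrt kappa * d z w / 2)) in *.
  assert (Hk : 0 < k <= 1).
  { unfold k. assert (T := sd_bound d kappa H z w). split; [apply cos_gt_0; lra| apply COS_bound]. }
  apply (small_le _ _ 4); [lra|]. intros eps He.
  destruct (Az eps He) as [N1 H1]. destruct (Aw eps He) as [N2 H2].
  destruct (Bm eps He (max N1 N2)) as [n [Hn Hn2]].
  specialize (H1 n ltac:(lia)). specialize (H2 n ltac:(lia)). specialize (Hm (y n)).
  nra.
Qed.

Lemma center {X} (d : X -> X -> R) kappa (H : setting d kappa) (Hc : complete d) (y : nat -> X) w0 l0 :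
  LI (fun n => ee d kappa (y n) w0) l0 -> 0 < l0 ->
  exists c lc, LI (fun n => ee d kappa (y n) c) lc /\
    forall w lw, LI (fun n => ee d kappa (y n) w) lw -> lw <= lc /\ (w <> c -> lw < lc).
Proof.
  intros H0 Hl0.
  set (LIy := fun w l => LI (fun n => ee d kappa (y n) w) l).
  assert (Hbd : forall w n, 0 <= ee d kappa (y n) w <= 1) by (intros; assert (T := ee_bnd d kappa H (y n) w); lra).
  assert (Hex : forall w, exists l, LIy w l) by (intros w; apply (LI_ex _ 0 1); auto).
  assert (Hlb : forall w l, LIy w l -> 0 <= l <= 1) by (intros w l Hl; apply (LI_bounds (fun n => ee d kappa (y n) w) l 0 1); auto).
  set (E := fun l => exists w, LIy w l).
  destruct (completeness E) as [M [HM1 HM2]].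
  { exists 1. intros l [w Hw]. apply (Hlb w l Hw). }
  { exists l0, w0. exact H0. }
  assert (HMl0 : l0 <= M) by (apply HM1; exists w0; exact H0).
  assert (HMub : forall w l, LIy w l -> l <= M) by (intros w l Hw; apply HM1; exists w; exact Hw).
  assert (Hs := sk_pos kappa (st_k _ _ H)). set (s := sqrt kappa) in *.
  assert (Hm := st_m _ _ H).
  assert (Hclose : forall z w lz lw dl, LIy z lz -> LIy w lw -> 0 <= dl -> M - dl <= lz -> M - dl <= lw ->
            (s * d z w / 2) ^ 2 <= 3 * dl / M).
  { intros z w lz lw dl Hz Hw Hdl H1 H2.
    destruct (lemmaS d kappa H z w) as [m Hmid].
    destruct (Hex m) as [lm Hlm].
    assert (T := LI_mid d kappa H y z w m lz lw lm Hmid Hz Hw Hlm).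
    assert (Hlm' := HMub m lm Hlm). assert (Hlm0 := Hlb m lm Hlm).
    fold s in T. set (k := cos (s * d z w / 2)) in *.
    assert (Hb := sd_bound d kappa H z w). fold s in Hb.
    assert (Hk := cos_upper (s * d z w / 2) ltac:(split; nra)). fold k in Hk.
    assert (HkM : 2 * M - 2 * dl <= 2 * k * M).
    { assert (0 <= k) by (unfold k; apply Rlt_le, cos_gt_0; nra). nra. }
    apply (Rmult_le_reg_r M); [lra|]. replace (3 * dl / M * M) with (3 * dl) by (field; lra).
    nra. }
  assert (Hseq : forall n : nat, exists w, exists l, LIy w l /\ M - / INR (S n) < l).
  { intros n. assert (Hpos : 0 < / INR (S n)) by (apply Rinv_0_lt_compat, lt_0_INR; lia).
    destruct (classic (exists w l, LIy w l /\ M - / INR (S n) < l)) as [Hy|Hno]; auto.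
    exfalso. assert (M <= M - / INR (S n)); [|lra].
    apply HM2. intros l [w Hw]. destruct (Rle_dec l (M - / INR (S n))) as [|Hn]; auto.
    exfalso. apply Hno. exists w, l. split; auto. lra. }
  set (W := fun n => proj1_sig (constructive_indefinite_description _ (Hseq n))).
  assert (HW : forall n, exists l, LIy (W n) l /\ M - / INR (S n) < l)
    by (intros n; unfold W; destruct (constructive_indefinite_description _ (Hseq n)); simpl; auto).
  assert (Hinv : forall N n, (0 < N)%nat -> (N <= S n)%nat -> / INR (S n) <= / INR N).
  { intros N n H1 H2. apply Rinv_le_contravar; [apply lt_0_INR; lia| apply le_INR; lia]. }
  assert (HM0 : 0 < M) by lra.
  assert (Hcauchy : forall eps, 0 < eps -> exists N, forall m n, (N <= m)%nat -> (N <= n)%nat -> d (W m) (W n) < eps).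
  { intros eps He.
    destruct (archimed_cor1 (M * s ^ 2 * eps ^ 2 / 12)) as [N0 [HN0 HN0p]].
    { apply Rdiv_lt_0_compat; [|lra]. apply Rmult_lt_0_compat; [apply Rmult_lt_0_compat|]; nra. }
    exists N0. intros m n Hm1 Hn1.
    destruct (HW m) as [lm [Hlm Hlm2]]. destruct (HW n) as [ln [Hln Hln2]].
    assert (Hi1 := Hinv N0 m HN0p ltac:(lia)). assert (Hi2 := Hinv N0 n HN0p ltac:(lia)).
    assert (Hpos : 0 < / INR N0) by (apply Rinv_0_lt_compat, lt_0_INR; lia).
    assert (T := Hclose (W m) (W n) lm ln (/ INR N0) Hlm Hln ltac:(lra) ltac:(lra) ltac:(lra)).
    assert (T2 : 3 * / INR N0 / M < (s * eps / 2) ^ 2).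
    { generalize dependent (/ INR N0). intros q Hq _ _ _ _. apply (Rmult_lt_reg_r M); [lra|]. unfold Rdiv at 1. rewrite Rmult_assoc, Rinv_l, Rmult_1_r by lra. nra. }
    assert (H0d := Defs.dist_nonneg d Hm (W m) (W n)).
    destruct (Rlt_dec (d (W m) (W n)) eps) as [|Hn]; auto. exfalso.
    assert (eps <= d (W m) (W n)) by lra.
    assert (s * eps / 2 <= s * d (W m) (W n) / 2) by nra.
    assert (0 <= s * eps / 2) by nra. nra. }
  destruct (Hc W Hcauchy) as [c Hlim].
  destruct (Hex c) as [lc Hlc].
  assert (HlcM : lc = M).
  { apply Rle_antisym; [apply (HMub c lc Hlc)|].
    apply (small_le _ _ (3 + s)); [lra|]. intros eps He.
    destruct (Hlim eps He) as [N1 HN1]. destruct (archimed_cor1 eps He) as [N2 [HN2 HN2p]].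
    set (n := max N1 N2). destruct (HW n) as [lw [Hlw Hlw2]].
    assert (Hi := Hinv N2 n HN2p ltac:(unfold n; lia)).
    specialize (HN1 n ltac:(unfold n; lia)).
    destruct Hlw as [A1 _]. destruct Hlc as [_ B1].
    destruct (A1 eps He) as [N3 HN3]. destruct (B1 eps He N3) as [i [Hi3 Hi4]].
    specialize (HN3 i Hi3).
    assert (L := ee_lip2 d kappa H (y i) (W n) c). fold s in L. apply abs_le in L.
    assert (0 <= s * d (W n) c <= s * eps) by (split; [apply Rmult_le_pos; [lra| apply Defs.dist_nonneg; auto]| apply Rmult_le_compat_l; lra]).
    nra. }
  exists c, lc. split; auto. intros w lw Hw. subst lc.
  assert (Hle := HMub w lw Hw). split; auto. intros Hne.
  destruct (Rlt_dec lw M) as [|Hn]; auto. exfalso. apply Hne.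
  assert (T := Hclose c w M lw 0 Hlc Hw ltac:(lra) ltac:(lra) ltac:(lra)).
  replace (3 * 0 / M) with 0 in T by (field; lra).
  assert (Hd0 : d c w = 0).
  { assert (H0d := Defs.dist_nonneg d Hm c w).
    assert (Hq : (s * d c w / 2) ^ 2 = 0) by (assert (T' := pow2_ge_0 (s * d c w / 2)); lra).
    assert (Hz : s * d c w / 2 = 0) by (destruct (Req_dec (s * d c w / 2) 0); auto; exfalso; apply (pow_nonzero _ 2 H1); exact Hq).
    assert (Hq' : s * d c w = 0) by lra. apply Rmult_integral in Hq'. destruct Hq'; lra. }
  symmetry. apply (Defs.dist_eq0 d Hm). exact Hd0.
Qed.

Lemma mul_le1 t X : 0 <= t <= 1 -> 0 <= X -> t * X <= X.
Proof. intros. nra. Qed.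

Lemma real_step Cn Cz a b g dl : 0 <= Cn <= 1 -> 0 <= Cz <= 1 -> 0 <= a <= 1 -> 0 <= b <= 1 -> 0 <= g <= 1 ->
  0 <= dl -> a <= g + dl ->
  (Cn ^ 2 * (1 + Cz ^ 2) * Cz + Cz ^ 2 * (1 + Cn ^ 2) * Cn) * a >=
    Cn ^ 2 * (1 + Cz ^ 2) * b + Cz ^ 2 * (1 + Cn ^ 2) * g ->
  Cz * a >= b - 6 * (1 - Cn) - 2 * dl.
Proof.
  intros H1 H2 H3 H4 H5 H0 H6 H7.
  assert (Cn2 : 0 <= Cn ^ 2 <= 1) by (split; nra).
  assert (Cz2 : 0 <= Cz ^ 2 <= 1) by (split; nra).
  assert (P1 : 0 <= (1 + Cz ^ 2) * Cz * a) by (apply Rmult_le_pos; [apply Rmult_le_pos|]; lra).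
  assert (E1 := mul_le1 _ _ Cn2 P1).
  assert (P2 : 0 <= Cz ^ 2 * a) by (apply Rmult_le_pos; lra).
  assert (Q : 0 <= (1 + Cn ^ 2) * Cn / 2 <= 1) by (split; nra).
  assert (E2 := mul_le1 _ _ Q P2).
  assert (P3 : 0 <= (1 + Cz ^ 2) * b) by (apply Rmult_le_pos; lra).
  assert (B3 : (1 + Cz ^ 2) * b <= 2) by nra.
  assert (P4 : 0 <= Cz ^ 2 * g <= 1) by (split; [apply Rmult_le_pos|]; nra).
  assert (B1 : 1 - Cn ^ 2 <= 2 * (1 - Cn)) by nra.
  assert (B2 : 1 + Cn ^ 2 >= 2 * Cn) by nra.
  assert (E3 : (1 - Cn ^ 2) * ((1 + Cz ^ 2) * b) <= 2 * (1 - Cn) * 2).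
  { apply Rmult_le_compat; nra. }
  assert (E4 : (1 + Cn ^ 2 - 2 * Cn) * (Cz ^ 2 * g) >= 0) by (apply Rle_ge, Rmult_le_pos; nra).
  assert (E5 : Cz ^ 2 * a <= Cz ^ 2 * g + dl) by nra.
  assert (E6 : (1 + Cz ^ 2) * (Cz * a) >= (1 + Cz ^ 2) * b - 6 * (1 - Cn) - 2 * dl).
  { assert (E7 : (1 - Cn) * (Cz ^ 2 * g) <= (1 - Cn) * 1) by (apply Rmult_le_compat_l; lra).
    nra. }
  assert (0 <= 6 * (1 - Cn) + 2 * dl) by nra.
  destruct (Rle_dec (b - 6 * (1 - Cn) - 2 * dl) 0). nra.
  assert (0 <= Cz ^ 2 * (b - 6 * (1 - Cn) - 2 * dl)) by (apply Rmult_le_pos; lra).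
  nra.
Qed.


Lemma vic_at {X} (d : X -> X -> R) kappa T (Hv : firmly_vicinal kappa d T) x' z :
  let Cn := ee d kappa (T x') x' in let Cz := ee d kappa (T z) z in
  (Cn ^ 2 * (1 + Cz ^ 2) * Cz + Cz ^ 2 * (1 + Cn ^ 2) * Cn) * ee d kappa (T x') (T z) >=
    Cn ^ 2 * (1 + Cz ^ 2) * ee d kappa (T x') z + Cz ^ 2 * (1 + Cn ^ 2) * ee d kappa (T z) x'.
Proof. unfold firmly_vicinal in Hv. specialize (Hv x' z). cbv zeta in Hv. exact Hv. Qed.

Lemma vic_fix {X} (d : X -> X -> R) kappa T (H : setting d kappa) (Hv : firmly_vicinal kappa d T) z q :
  T q = q -> ee d kappa (T z) z * ee d kappa (T z) q >= ee d kappa z q.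
Proof.
  intros Hq. assert (V := vic_at d kappa T Hv z q). cbv zeta in V.
  assert (Hm := st_m _ _ H).
  assert (E0 : ee d kappa (T q) q = 1).
  { unfold ee. rewrite Hq. rewrite (proj2 (Defs.dist_eq0 d Hm q q) eq_refl), Rmult_0_r. apply cos_0. }
  rewrite E0 in V. rewrite Hq in V.
  assert (Es : ee d kappa q z = ee d kappa z q) by (unfold ee; rewrite (Defs.dist_sym d Hm q z); auto).
  rewrite Es in V.
  assert (B1 := ee_bnd d kappa H (T z) z).
  set (Cz := ee d kappa (T z) z) in *. set (a := ee d kappa (T z) q) in *. set (b := ee d kappa z q) in *.
  assert (V' : (1 + Cz ^ 2) * (Cz * a) >= (1 + Cz ^ 2) * b) by nra.
  apply Rle_ge. apply (Rmult_le_reg_l (1 + Cz ^ 2)); nra.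
Qed.

Lemma fejer {X} (d : X -> X -> R) kappa T (H : setting d kappa) (Hv : firmly_vicinal kappa d T) x0 q :
  T q = q ->
  exists Lq, 0 < Lq /\ cvto (fun n => ee d kappa (Nat.iter n T x0) q) Lq /\
  (forall eps, 0 < eps -> exists N, forall n, (N <= n)%nat ->
     1 - ee d kappa (Nat.iter (S n) T x0) (Nat.iter n T x0) < eps /\
     sqrt kappa * d (Nat.iter (S n) T x0) (Nat.iter n T x0) < eps).
Proof.
  intros Hq.
  set (e := fun n => ee d kappa (Nat.iter n T x0) q).
  assert (Hstep : forall n, ee d kappa (Nat.iter (S n) T x0) (Nat.iter n T x0) * e (S n) >= e n).
  { intros n. unfold e. simpl. apply vic_fix; auto. }
  assert (Hbd : forall n, 0 < e n <= 1) by (intros; apply ee_bnd; auto).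
  assert (HC : forall n, 0 < ee d kappa (Nat.iter (S n) T x0) (Nat.iter n T x0) <= 1) by (intros; apply ee_bnd; auto).
  assert (Hgr : Un_growing e).
  { intros n. specialize (Hstep n). specialize (HC n). specialize (Hbd (S n)). nra. }
  destruct (growing_cv e Hgr) as [Lq HL].
  { exists 1. intros r [n Hn]. subst. apply Hbd. }
  assert (Hge := growing_ineq e Lq Hgr HL).
  assert (He0 := Hbd 0%nat). assert (H0L := Hge 0%nat).
  assert (Hcv : cvto e Lq).
  { intros eps He. destruct (HL eps He) as [N HN]. exists N. intros n Hn. apply HN. lia. }
  exists Lq. split; [lra|]. split; [exact Hcv|].
  intros eps He.
  set (mu := Rmin eps (eps ^ 2 / 3)).
  assert (Hmu : 0 < mu) by (unfold mu; apply Rmin_pos; nra).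
  destruct (Hcv (mu * e 0%nat / 2)) as [N HN]; [nra|].
  exists N. intros n Hn.
  assert (A1 := HN n Hn). assert (A2 := HN (S n) ltac:(lia)).
  apply Rabs_def2 in A1. apply Rabs_def2 in A2.
  specialize (Hstep n). specialize (HC n). assert (Hb1 := Hbd (S n)). assert (Hg1 := Hgr n).
  assert (Hg0 : e 0%nat <= e (S n)).
  { clear -Hgr. induction n; [apply Hgr|]. specialize (Hgr (S n)). lra. }
  set (Cn := ee d kappa (Nat.iter (S n) T x0) (Nat.iter n T x0)) in *.
  assert (K1 : (1 - Cn) * e 0%nat <= e (S n) - e n) by nra.
  assert (K2 : 1 - Cn < mu).
  { destruct (Rlt_dec (1 - Cn) mu) as [|Hn']; auto. exfalso.
    assert (mu * e 0%nat <= (1 - Cn) * e 0%nat) by (apply Rmult_le_compat_r; lra). lra. }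
  assert (Hmu1 : mu <= eps) by apply Rmin_l. assert (Hmu2 : mu <= eps ^ 2 / 3) by apply Rmin_r.
  split; [lra|].
  assert (Hb := sd_bound d kappa H (Nat.iter (S n) T x0) (Nat.iter n T x0)).
  assert (Hu := cos_upper _ (conj (proj1 Hb) (Rlt_le _ _ (proj2 Hb)))).
  fold (ee d kappa (Nat.iter (S n) T x0) (Nat.iter n T x0)) in Hu. fold Cn in Hu.
  set (th := sqrt kappa * d (Nat.iter (S n) T x0) (Nat.iter n T x0)) in *.
  assert (th ^ 2 < eps ^ 2) by lra.
  destruct (Rlt_dec th eps) as [|Hn']; auto. exfalso. nra.
Qed.

Lemma stepA {X} (d : X -> X -> R) kappa T (H : setting d kappa) (Hv : firmly_vicinal kappa d T) x0
  (Hsm : forall eps, 0 < eps -> exists N, forall n, (N <= n)%nat ->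
     1 - ee d kappa (Nat.iter (S n) T x0) (Nat.iter n T x0) < eps /\
     sqrt kappa * d (Nat.iter (S n) T x0) (Nat.iter n T x0) < eps)
  (phi : nat -> nat) (Hphi : forall i, (phi i < phi (S i))%nat) z l1 l2 :
  LI (fun i => ee d kappa (Nat.iter (phi i) T x0) z) l1 ->
  LI (fun i => ee d kappa (Nat.iter (phi i) T x0) (T z)) l2 -> l1 <= l2.
Proof.
  intros H1 H2.
  assert (Hm := st_m _ _ H).
  assert (Hpt : forall n, ee d kappa (T z) z * ee d kappa (Nat.iter n T x0) (T z) >=
     ee d kappa (Nat.iter n T x0) z - 6 * (1 - ee d kappa (Nat.iter (S n) T x0) (Nat.iter n T x0))
       - 4 * (sqrt kappa * d (Nat.iter (S n) T x0) (Nat.iter n T x0))).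
  { intros n. assert (V := vic_at d kappa T Hv (Nat.iter n T x0) z). cbv zeta in V.
    change (T (Nat.iter n T x0)) with (Nat.iter (S n) T x0) in V.
    assert (Es : ee d kappa (T z) (Nat.iter n T x0) = ee d kappa (Nat.iter n T x0) (T z))
      by (unfold ee; rewrite (Defs.dist_sym d Hm (T z)); auto).
    rewrite Es in V.
    set (xn := Nat.iter n T x0) in *. set (xn1 := Nat.iter (S n) T x0) in *.
    assert (L1 := ee_lip d kappa H xn1 xn (T z)). apply abs_le in L1.
    assert (L2 := ee_lip d kappa H xn1 xn z). apply abs_le in L2.
    assert (B1 := ee_bnd d kappa H xn1 xn). assert (B2 := ee_bnd d kappa H (T z) z).
    assert (B3 := ee_bnd d kappa H xn1 (T z)). assert (B4 := ee_bnd d kappa H xn1 z).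
    assert (B5 := ee_bnd d kappa H xn (T z)). assert (B6 := ee_bnd d kappa H xn z).
    assert (Hd0 : 0 <= sqrt kappa * d xn1 xn) by (apply Rmult_le_pos; [apply Rlt_le, sk_pos, (st_k _ _ H)| apply Defs.dist_nonneg; auto]).
    assert (R := real_step (ee d kappa xn1 xn) (ee d kappa (T z) z) (ee d kappa xn1 (T z)) (ee d kappa xn1 z)
                 (ee d kappa xn (T z)) (sqrt kappa * d xn1 xn) ltac:(lra) ltac:(lra) ltac:(lra) ltac:(lra) ltac:(lra)
                 Hd0 ltac:(lra) V).
    set (Cz := ee d kappa (T z) z) in *.
    assert (Cz * (ee d kappa xn1 (T z) - ee d kappa xn (T z)) <= sqrt kappa * d xn1 xn).
    { destruct (Rle_dec (ee d kappa xn1 (T z) - ee d kappa xn (T z)) 0); nra. }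
    lra. }
  assert (Hge := sub_ge phi Hphi).
  assert (B2 := ee_bnd d kappa H (T z) z). set (Cz := ee d kappa (T z) z) in *.
  assert (Hl2 : 0 <= l2 <= 1).
  { apply (LI_bounds (fun i => ee d kappa (Nat.iter (phi i) T x0) (T z)) l2 0 1); auto.
    intros; assert (T' := ee_bnd d kappa H (Nat.iter (phi n) T x0) (T z)); lra. }
  assert (l1 <= Cz * l2); [|nra].
  apply (small_le _ _ 12); [lra|]. intros eps He.
  destruct H1 as [A1 _]. destruct H2 as [_ B1].
  destruct (A1 eps He) as [N1 HN1]. destruct (Hsm eps He) as [N2 HN2].
  destruct (B1 eps He (max N1 N2)) as [i [Hi Hi2]].
  specialize (HN1 i ltac:(lia)). specialize (HN2 (phi i) ltac:(specialize (Hge i); lia)).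
  specialize (Hpt (phi i)).
  assert (Cz * ee d kappa (Nat.iter (phi i) T x0) (T z) <= Cz * (l2 + eps)) by (apply Rmult_le_compat_l; lra).
  nra.
Qed.


Lemma cos_approx u v dl : 0 <= u <= PI -> 0 <= v <= PI -> 0 <= dl -> u <= v + dl -> cos v - dl <= cos u.
Proof.
  intros Hu Hv Hd Hle. destruct (Rle_dec u v).
  - assert (cos v <= cos u) by (apply cos_decr_1; lra). lra.
  - assert (T := cos_lip u v). apply abs_le in T. rewrite Rabs_right in T by lra. lra.
Qed.

Lemma LI_id u l : cvto u l -> LI u l.
Proof. intros Hc. exact (LI_cv_sub u l (fun i => i) (fun i => Nat.lt_succ_diag_r i) Hc). Qed.

Lemma fixed_center {X} (d : X -> X -> R) kappa T (H : setting d kappa) (Hv : firmly_vicinal kappa d T) x0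
  (Hsm : forall eps, 0 < eps -> exists N, forall n, (N <= n)%nat ->
     1 - ee d kappa (Nat.iter (S n) T x0) (Nat.iter n T x0) < eps /\
     sqrt kappa * d (Nat.iter (S n) T x0) (Nat.iter n T x0) < eps)
  (phi : nat -> nat) (Hphi : forall i, (phi i < phi (S i))%nat) c lc :
  LI (fun i => ee d kappa (Nat.iter (phi i) T x0) c) lc ->
  (forall w lw, LI (fun i => ee d kappa (Nat.iter (phi i) T x0) w) lw -> lw <= lc /\ (w <> c -> lw < lc)) ->
  T c = c.
Proof.
  intros Hlc Hmax.
  destruct (LI_ex (fun i => ee d kappa (Nat.iter (phi i) T x0) (T c)) 0 1) as [l' Hl'].
  { intros; assert (T' := ee_bnd d kappa H (Nat.iter (phi n) T x0) (T c)); lra. }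
  assert (A := stepA d kappa T H Hv x0 Hsm phi Hphi c lc l' Hlc Hl').
  destruct (classic (T c = c)) as [|Hn]; auto.
  destruct (Hmax (T c) l' Hl') as [_ B]. specialize (B Hn). lra.
Qed.

Theorem corollary5p2 (X : Type) (d : X -> X -> R) (kappa : R) (T : X -> X) :
  0 < kappa -> is_metric d -> CAT kappa d -> complete d ->
  (forall v v', d v v' < Dk kappa / 2) ->
  firmly_vicinal kappa d T ->
  (exists z, T z = z) ->
  forall x : X, exists p, T p = p /\ Delta_conv d (fun n => Nat.iter n T x) p.
Proof.
  intros Hk Hm Hcat Hc Hd Hv [q0 Hq0] x.
  assert (H : setting d kappa) by (constructor; auto).
  assert (Hs := sk_pos kappa Hk).
  destruct (fejer d kappa T H Hv x q0 Hq0) as [L0 [HL0 [Hcv0 Hsm]]].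
  assert (Hid : forall i, ((fun i : nat => i) i < (fun i : nat => i) (S i))%nat) by (intros; simpl; lia).
  destruct (center d kappa H Hc (fun n => Nat.iter n T x) q0 L0 (LI_id _ _ Hcv0) HL0) as [p [lp0 [Hlp0 Hmax]]].
  assert (Tp : T p = p) by exact (fixed_center d kappa T H Hv x Hsm (fun i => i) Hid p lp0 Hlp0 Hmax).
  exists p. split; [exact Tp|].
  intros phi Hphi lp Hlp z lz Hlz Hzp.
  destruct (fejer d kappa T H Hv x p Tp) as [Lp [HLp [Hcvp _]]].
  set (y := fun i => Nat.iter (phi i) T x).
  assert (HyP : LI (fun i => ee d kappa (y i) p) Lp) by exact (LI_cv_sub _ _ phi Hphi Hcvp).
  destruct (center d kappa H Hc y p Lp HyP HLp) as [c [lc [Hlc Hmaxc]]].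
  assert (Tc : T c = c) by exact (fixed_center d kappa T H Hv x Hsm phi Hphi c lc Hlc Hmaxc).
  destruct (fejer d kappa T H Hv x c Tc) as [Lc [HLc [Hcvc _]]].
  assert (E1 : lc = Lc) by exact (LI_unique _ _ _ Hlc (LI_cv_sub _ _ phi Hphi Hcvc)).
  assert (E2 : lp0 = Lp) by exact (LI_unique _ _ _ Hlp0 (LI_id _ _ Hcvp)).
  assert (Hcp : c = p).
  { destruct (classic (c = p)) as [|Hn]; auto. exfalso.
    destruct (Hmax c Lc (LI_id _ _ Hcvc)) as [_ B1]. specialize (B1 Hn).
    destruct (Hmaxc p Lp HyP) as [B2 _]. lra. }
  subst c.
  destruct (LI_ex (fun i => ee d kappa (y i) z) 0 1) as [lzc Hlzc].
  { intros; assert (T' := ee_bnd d kappa H (y n) z); lra. }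
  destruct (Hmaxc z lzc Hlzc) as [_ B]. specialize (B Hzp). rewrite E1 in B.
  assert (Hlp_ub : lp <= Dk kappa / 2).
  { apply (small_le _ _ 1); [lra|]. intros eps He. destruct (Hlp eps He) as [_ F].
    destruct (F 0%nat) as [n [_ Hn]]. specialize (Hd (Nat.iter (phi n) T x) p). lra. }
  assert (Hlp_lb : 0 <= lp).
  { apply (small_le _ _ 1); [lra|]. intros eps He. destruct (Hlp eps He) as [[N F] _].
    specialize (F N (le_n N)). assert (T' := Defs.dist_nonneg d Hm (Nat.iter (phi N) T x) p). lra. }
  assert (HDk : sqrt kappa * (Dk kappa / 2) = PI / 2) by (unfold Dk; field; lra).
  assert (Hv0 : 0 <= sqrt kappa * lp <= PI).
  { assert (PI > 0) by apply PI_RGT_0. split; [nra|].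
    assert (sqrt kappa * lp <= sqrt kappa * (Dk kappa / 2)) by (apply Rmult_le_compat_l; lra). lra. }
  destruct (Rlt_dec lp lz) as [|Hn]; auto. exfalso.
  assert (Hle : lz <= lp) by lra.
  assert (Ha : cos (sqrt kappa * lp) <= lzc).
  { apply (small_le _ _ (1 + sqrt kappa)); [lra|]. intros eps He.
    destruct (Hlz eps He) as [[N F] _]. destruct Hlzc as [_ G].
    destruct (G eps He N) as [i [Hi Hi2]]. specialize (F i Hi).
    assert (Hb := sd_bound d kappa H (y i) z).
    assert (Cm := cos_approx (sqrt kappa * d (y i) z) (sqrt kappa * lp) (sqrt kappa * eps) ltac:(lra) Hv0 ltac:(nra) ltac:(unfold y in *; nra)).
    unfold ee in Hi2. lra. }
  assert (Hb' : Lp <= cos (sqrt kappa * lp)).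
  { apply (small_le _ _ (1 + sqrt kappa)); [lra|]. intros eps He.
    destruct (Hlp eps He) as [_ F]. destruct HyP as [G _].
    destruct (G eps He) as [N GN]. destruct (F N) as [i [Hi Hi2]]. specialize (GN i Hi).
    assert (Hb := sd_bound d kappa H (y i) p).
    assert (Cm := cos_approx (sqrt kappa * lp) (sqrt kappa * d (y i) p) (sqrt kappa * eps) Hv0 ltac:(lra) ltac:(nra) ltac:(unfold y in *; nra)).
    unfold ee in GN. lra. }
  assert (E3 : Lp = Lc) by exact (LI_unique _ _ _ HyP (LI_cv_sub _ _ phi Hphi Hcvc)).
  lra.
Qed.
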